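(* Every quantifier-free lifted Bayesian network $\mathfrak{G}$ over a relational signature $\sigma$ induces a projective family of distributions. In particular, $\mathfrak{G}$ has an asymptotic limit.
   Context: A relational signature $\sigma$ is a set of relation symbols (possibly multi-sorted, without equality). A functional lifted Bayesian network (FLBN) over $\sigma$ consists of a directed acyclic graph $G$ with node set $\sigma$, for each $R\in\sigma$ a finite tuple $(\chi_{R,i}(\vec{x},\vec{y}))_{i\le n_R}$ of first-order formulas over the signature of the $G$-parents of $R$ ($\vec{x}$ a sort-appropriate tuple of variables of length the arity of $R$), and a continuous $f_R:[0,1]^{n_R}\to[0,1]$. On a finite domain $D$ it induces the distribution on $\sigma$-structures with domain $D$ given by the Bayesian network with nodes the ground atoms $R(\vec{a})$, edges from $R_1(\vec{b})$ to $R_2(\vec{a})$ whenever $R_1\to R_2$ in $G$, and $R(\vec{a})$ true with probability $f_R\big((\|\chi_{R,i}(\vec{a},\vec{y})\|_{\vec{y}})_i\big)$, where $\|\chi(\vec{a},\vec{y})\|_{\vec{y}}$ is the fraction of sort-appropriate tuples $\vec{b}$ for $\vec{y}$ with $\chi(\vec{a},\vec{b})$ true in the structure given by the parent values. A quantifier-free lifted Bayesian network is an FLBN in which every $\chi_{R,i}$ is quantifier-free with all variables among $\vec{x}$. Domains are taken to be initial segments of $\mathbb{N}$ in each sort, with sort sizes $\vec{n}$; write $\mathbb{P}_{\vec{n}}$ for the induced distribution. Let $\Omega_\infty$ be the set of $\sigma$-structures with every sort equal to $\mathbb{N}$, with the $\sigma$-algebra generated by the generating sets $A$: for elements $a_1,\dots,a_m$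 and a $\sigma$-structure $\mathfrak{Y}$ on $\{a_1,\dots,a_m\}$, the set of structures whose induced substructure on $\{a_1,\dots,a_m\}$ is $\mathfrak{Y}$; $\mathbb{P}_{\vec{n}}(A)$ is defined (as the probability that the induced substructure on $\{a_1,\dots,a_m\}$ is $\mathfrak{Y}$) whenever each $a_i$ lies in the domain of its sort. A family $(\mathbb{P}_{\vec{n}})$ is projective if for every generating set $A$ the sequence $\mathbb{P}_{\vec{n}}(A)$ is constant wherever defined. A probability measure $\mathbb{P}_\infty$ on $\Omega_\infty$ is the asymptotic limit of $\mathfrak{G}$ if for every sequence of domains monotone and unbounded in the cardinality of every sort and every generating set $A$, the probabilities of $A$ converge to $\mathbb{P}_\infty(A)$. *)

(* Defs.v *)
From HB Require Import structures.
From mathcomp Require Import all_boot all_order all_algebra.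
From mathcomp Require Import all_classical all_reals all_analysis.

Set Implicit Arguments.
Unset Strict Implicit.
Unset Printing Implicit Defensive.

Import Order.TTheory GRing.Theory Num.Theory.
Import numFieldNormedType.Exports.

Local Open Scope ring_scope.
Local Open Scope classical_set_scope.

(* Elements of a domain of sort [s] with size [n s] are [0, ..., n s - 1].
   Variables carry their sort: a variable is a pair [(s, i)] = the i-th
   variable of sort s. *)

Section Syntax.
Variables (S Rel : finType).

Definition var := (S * nat)%type.

Inductive formula : Type :=
| FTrue
| FAtom (r : Rel) (args : seq var)
| FNot (f : formula)
| FAnd (f g : formula)
| FOr (f g : formula)
| FExists (v : var) (f : formula)
| FForall (v : var) (f : formula).

Fixpoint qfree (f : formula) : bool :=
  match f with
  | FTrue | FAtom _ _ => true
  | FNot g => qfree g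
  | FAnd g h | FOr g h => qfree g && qfree h
  | FExists _ _ | FForall _ _ => false
  end.

Fixpoint fvars (f : formula) : seq var :=
  match f with
  | FTrue => [::]
  | FAtom _ a => a
  | FNot g => fvars g
  | FAnd g h | FOr g h => fvars g ++ fvars h
  | FExists v g | FForall v g => [seq u <- fvars g | u != v]
  end.

Fixpoint allvars (f : formula) : seq var :=
  match f with
  | FTrue => [::]
  | FAtom _ a => a
  | FNot g => allvars g
  | FAnd g h | FOr g h => allvars g ++ allvars h
  | FExists v g | FForall v g => v :: allvars g
  end.

Fixpoint rels (f : formula) : seq Rel :=
  match f with
  | FTrue => [::]
  | FAtom r _ => [:: r]
  | FNot g => rels g
  | FAnd g h | FOr g h => rels g ++ rels h
  | FExists _ g | FForall _ g => rels g
  end.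

Variable ar : Rel -> seq S.

Fixpoint well_sorted (f : formula) : bool :=
  match f with
  | FTrue => true
  | FAtom r a => map fst a == ar r
  | FNot g => well_sorted g
  | FAnd g h | FOr g h => well_sorted g && well_sorted h
  | FExists _ g | FForall _ g => well_sorted g
  end.

(** Semantics.  A structure with sort sizes [n] is given by a function
    [w : Rel -> seq nat -> bool]; only its values on sort-appropriate
    in-domain tuples matter. *)
Definition structure := Rel -> seq nat -> bool.

Definition upd (e : var -> nat) (v : var) (k : nat) : var -> nat :=
  fun u => if u == v then k else e u.

Fixpoint eval (n : S -> nat) (w : structure) (e : var -> nat) (f : formula)
  : bool :=
  match f with
  | FTrue => true
  | FAtom r a => w r (map e a)
  | FNot g => ~~ eval n w e g
  | FAnd g h => eval n w e g && eval n w e h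
  | FOr g h => eval n w e g || eval n w e h
  | FExists v g => has (fun k => eval n w (upd e v k) g) (iota 0 (n v.1))
  | FForall v g => all (fun k => eval n w (upd e v k) g) (iota 0 (n v.1))
  end.

Fixpoint tuples (n : S -> nat) (ss : seq S) : seq (seq nat) :=
  match ss with
  | [::] => [:: [::]]
  | s :: ss' => [seq k :: t | k <- iota 0 (n s), t <- tuples n ss']
  end.

(* the canonical tuple x of free variables for relation r:
   x_j is the variable (ar r)_j indexed j *)
Definition xvars (r : Rel) : seq var := zip (ar r) (iota 0 (size (ar r))).

Definition assign (r : Rel) (ys : seq var) (a b : seq nat) : var -> nat :=
  fun v => if v \in xvars r then nth 0%N a (index v (xvars r))
           else if v \in ys then nth 0%N b (index v ys) else 0%N.

End Syntax.

Arguments FTrue {S Rel}.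

Section FLBN.
Variables (R : realType) (S Rel : finType) (ar : Rel -> seq S).

(* A combination formula chi(x, y): the tuple y of variables and the
   formula. *)
Definition cformula := (seq (var S) * formula S Rel)%type.

Record flbn := FLBN {
  dag : rel Rel;                          (* edge R1 -> R2 : dag R1 R2 *)
  chis : Rel -> seq cformula;
  comb : forall r : Rel, 'rV[R]_(size (chis r)) -> R
}.

Definition acyclic (e : rel Rel) : Prop :=
  ~ exists (x : Rel) (p : seq Rel), [&& p != [::], path e x p & last x p == x].

Definition unit_cube (k : nat) : set 'rV[R]_k :=
  [set v | forall i, 0 <= v ord0 i <= 1].

Definition cformula_wf (G : rel Rel) (r : Rel) (c : cformula) : bool :=
  let: (ys, f) := c in
  [&& uniq ys, all (fun y => y \notin xvars ar r) ys,
      well_sorted ar f,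
      all (fun r' => G r' r) (rels f) &
      all (fun v => (v \in xvars ar r) || (v \in ys)) (fvars f)].

Definition flbn_wf (B : flbn) : Prop :=
  [/\ acyclic (dag B),
      (forall r, all (cformula_wf (dag B) r) (chis B r)),
      (forall r, let K := @unit_cube (size (chis B r)) in
                 {within K, continuous (@comb B r)}) &
      (forall r v, v \in @unit_cube (size (chis B r)) -> 0 <= @comb B r v <= 1)].

Definition qf_lbn (B : flbn) : Prop :=
  forall r, all (fun c => qfree c.2 &&
                  all (fun v => v \in xvars ar r) (allvars c.2)) (chis B r).

Definition frac (n : S -> nat) (w : structure Rel) (r : Rel) (c : cformula)
  (a : seq nat) : R :=
  let bs := tuples n (map fst c.1) in
  (count (fun b => eval n w (assign ar r c.1 a b) c.2) bs)%:R / (size bs)%:R.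

Definition atom_prob (B : flbn) (n : S -> nat) (w : structure Rel) (r : Rel)
  (a : seq nat) : R :=
  @comb B r (\row_(i < size (chis B r)) frac n w r (nth ([::], FTrue) (chis B r) i) a).

Definition ground_atoms (n : S -> nat) : seq (Rel * seq nat) :=
  [seq (r, t) | r <- enum Rel, t <- tuples n (ar r)].

Fixpoint bitseqs (k : nat) : seq bitseq :=
  if k is k'.+1 then [seq b :: s | b <- [:: true; false], s <- bitseqs k']
  else [:: [::]].

Definition world_of (n : S -> nat) (bs : bitseq) : structure Rel :=
  fun r t => nth false bs (index (r, t) (ground_atoms n)).

Definition world_prob (B : flbn) (n : S -> nat) (w : structure Rel) : R :=
  \prod_(g <- ground_atoms n)
     (if w g.1 g.2 then atom_prob B n w g.1 g.2 else 1 - atom_prob B n w g.1 g.2).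

(** Generating sets.  [E] lists the elements a_1..a_m (each with its sort),
    [Y] gives the structure on them. *)
Fixpoint etuples (E : seq (var S)) (ss : seq S) : seq (seq nat) :=
  match ss with
  | [::] => [:: [::]]
  | s :: ss' => [seq k :: t | k <- [seq e.2 | e <- E & e.1 == s],
                              t <- etuples E ss']
  end.

Definition in_cyl (E : seq (var S)) (Y : structure Rel) (w : structure Rel)
  : bool :=
  all (fun r => all (fun t => w r t == Y r t) (etuples E (ar r))) (enum Rel).

(* P_n(A) is defined: every a_i lies in the domain of its sort *)
Definition cyl_defined (n : S -> nat) (E : seq (var S)) : bool :=
  all (fun e => e.2 < n e.1)%N E.

Definition Pn (B : flbn) (n : S -> nat) (E : seq (var S)) (Y : structure Rel)
  : R :=
  \sum_(bs <- bitseqs (size (ground_atoms n)))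
     world_prob B n (world_of n bs) * (in_cyl E Y (world_of n bs))%:R.

Definition nonempty_domain (n : S -> nat) : bool := [forall s, 0 < n s]%N.

Definition projective (B : flbn) : Prop :=
  forall (E : seq (var S)) (Y : structure Rel) (n n' : S -> nat),
    nonempty_domain n -> nonempty_domain n' ->
    cyl_defined n E -> cyl_defined n' E ->
    Pn B n E Y = Pn B n' E Y.

(** The space Omega_infty of structures with all sorts equal to nat,
    with the sigma-algebra generated by the generating sets. *)
Definition Omega := structure Rel.

Definition cyl (E : seq (var S)) (Y : structure Rel) : set Omega :=
  [set w | in_cyl E Y w].

Definition gen_sets : set (set Omega) :=
  [set A | exists E Y, A = cyl E Y].

Definition OmegaInf := g_sigma_algebraType gen_sets.

Definition asymptotic_limit (B : flbn) (P : probability OmegaInf R) : Prop :=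
  forall (ns : nat -> S -> nat),
    (forall k s, (ns k s <= ns k.+1 s)%N) ->
    (forall s M, exists k, (M <= ns k s)%N) ->
    forall (E : seq (var S)) (Y : structure Rel),
      (fun k => Pn B (ns k) E Y) @ \oo --> fine (P (cyl E Y)).

End FLBN.

(* Main.v *)
Require Import Defs.
From HB Require Import structures.
From mathcomp Require Import all_boot all_order all_algebra.
From mathcomp Require Import all_classical all_reals all_analysis.
Set Implicit Arguments.
Unset Strict Implicit.
Unset Printing Implicit Defensive.
Import Order.TTheory GRing.Theory Num.Theory.
Import numFieldNormedType.Exports.
Local Open Scope ring_scope.
Section Marg.
Variables (R : comRingType) (X : eqType).

Definition updX (y : X) (b : bool) (w : X -> bool) : X -> bool :=
  fun x => if y == x then b else w x.

Fixpoint SumR (L : seq X) (G : (X -> bool) -> R) : R :=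
  match L with
  | [::] => G (fun _ => false)
  | y :: L' => SumR L' (fun w => G (updX y true w)) +
               SumR L' (fun w => G (updX y false w))
  end.

Lemma SumR_ext L G G' : (forall w, G w = G' w) -> SumR L G = SumR L G'.
Proof. by move=> h; have -> : G = G' by apply: boolp.funext. Qed.

Lemma SumR_add L G H :
  SumR L (fun w => G w + H w) = SumR L G + SumR L H.
Proof.
elim: L G H => [|y L IH] G H //=.
rewrite (IH (fun w => G (updX y true w))) (IH (fun w => G (updX y false w))).
by rewrite addrACA.
Qed.

Lemma updX_comm y z b c w : y != z ->
  updX y b (updX z c w) = updX z c (updX y b w).
Proof.
move=> yz; apply: boolp.funext => x; rewrite /updX.
case: (eqVneq y x) => [<-|//]; by rewrite eq_sym (negbTE yz).
Qed.

Lemma SumR_swap y z L G : y != z ->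
  SumR [:: y, z & L] G = SumR [:: z, y & L] G.
Proof.
move=> yz /=.
have e b c : (fun w => G (updX y b (updX z c w))) = (fun w => G (updX z c (updX y b w))).
  by apply: boolp.funext => w; rewrite updX_comm.
by rewrite !e addrACA.
Qed.

Lemma SumR_rem y L G : y \in L -> SumR L G = SumR (y :: rem y L) G.
Proof.
elim: L G => [|z L IH] G //=.
rewrite in_cons; case: (eqVneq z y) => [->|zy] //= yL.
rewrite (IH _ yL) (IH (fun w => G (updX z false w)) yL).
have -> : SumR [:: y & rem y L] (fun w => G (updX z true w)) +
  SumR [:: y & rem y L] (fun w => G (updX z false w)) = SumR [:: z, y & rem y L] G by [].
by rewrite SumR_swap // eq_sym.
Qed.

Lemma SumR_perm L L' G : perm_eq L L' -> SumR L G = SumR L' G.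
Proof.
elim: L L' G => [|y L IH] L' G.
  by rewrite perm_sym => /perm_nilP ->.
move=> pe; have yL' : y \in L' by rewrite -(perm_mem pe) mem_head.
rewrite (SumR_rem G yL') /=.
have pe' : perm_eq L (rem y L').
  by rewrite -(perm_cons y) (perm_trans pe) // perm_to_rem.
by rewrite !(IH (rem y L')).
Qed.

Lemma SumR_scale L c G : SumR L (fun w => c * G w) = c * SumR L G.
Proof.
elim: L c G => [|y L IH] c G //=.
by rewrite (IH c (fun w => G (updX y true w))) (IH c (fun w => G (updX y false w))) mulrDr.
Qed.


Section MargP.
Variables (p : X -> (X -> bool) -> R) (D : rel X).
Definition fac x w := if w x then p x w else 1 - p x w.

Lemma updX_same y b w : updX y b w y = b.
Proof. by rewrite /updX eqxx. Qed.

Lemma updX_other y b w x : y != x -> updX y b w x = w x.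
Proof. by rewrite /updX => /negbTE ->. Qed.

Lemma permcase (A : seq X) (Psi : (X -> bool) -> R) L :
  uniq L -> uniq A -> {subset A <= L} -> [seq x <- L | x \notin A] = [::] ->
  SumR L (fun w => (\prod_(x <- L) fac x w) * Psi w) =
  SumR A (fun w => (\prod_(x <- A) fac x w) * Psi w).
Proof.
move=> uL uA AL K0.
have LA : L =i A.
  move=> x; apply/idP/idP; last exact: AL.
  move=> xL; apply: contraT => xA.
  have : x \in [seq x <- L | x \notin A] by rewrite mem_filter xA xL.
  by rewrite K0.
have pLA := uniq_perm uL uA LA.
rewrite (SumR_perm _ pLA); apply: SumR_ext => w.
by rewrite (perm_big _ pLA).
Qed.

Lemma marg (A : seq X) (Psi : (X -> bool) -> R) L :
  uniq L -> {subset A <= L} -> uniq A ->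
  (forall x, x \in L -> forall w w', (forall z, D x z -> w z = w' z) -> p x w = p x w') ->
  (forall x, x \in A -> forall z, D x z -> z \in A) ->
  (forall K, K != [::] -> {subset K <= L} -> (forall x, x \in K -> x \notin A) ->
     exists2 y, y \in K & forall x, x \in K -> ~~ D x y) ->
  (forall w w', (forall z, z \in A -> w z = w' z) -> Psi w = Psi w') ->
  SumR L (fun w => (\prod_(x <- L) fac x w) * Psi w) =
  SumR A (fun w => (\prod_(x <- A) fac x w) * Psi w).
Proof.
move=> uL0 AL0 uA dep0 Acl sink0 Psidep.
move: uL0 AL0 dep0 sink0.
elim: {L}(size L) {-2}L (leqnn (size L)) => [|m IH] L szL uL AL dep sink.
  by apply: permcase => //; move: szL; rewrite leqn0 => /eqP/size0nil ->.
have [K0|] := eqVneq [seq x <- L | x \notin A] [::]; first exact: permcase.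
move=> /sink [].
- by move=> x; rewrite mem_filter => /andP[].
- by move=> x; rewrite mem_filter => /andP[].
move=> y; rewrite mem_filter => /andP[yA yL] ysink.
set L1 := rem y L.
have yL1 : y \in L1 = false by rewrite mem_rem_uniqF.
have L1L : {subset L1 <= L} by move=> x; apply: mem_rem.
have nDyy : ~~ D y y by apply: ysink; rewrite mem_filter yA.
have key b w : (\prod_(x <- L) fac x (updX y b w)) * Psi (updX y b w) =
   (if b then p y w else 1 - p y w) * ((\prod_(x <- L1) fac x w) * Psi w).
  rewrite (perm_big _ (perm_to_rem yL)) big_cons -/L1 mulrA; congr (_ * _ * _).
  - have pyw : p y (updX y b w) = p y w.
      apply: dep => // z Dyz.
      apply: updX_other; apply: contraNneq nDyy => yz.
      by rewrite {2}yz.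
    by rewrite /fac updX_same pyw.
  - apply: eq_big_seq => x xL1.
    have yx : y != x by apply: contraNneq (negbT yL1) => ->.
    suff pxw : p x (updX y b w) = p x w by rewrite /fac updX_other // pxw.
    apply: dep => [|z Dxz]; first exact: L1L.
    apply: updX_other; have [xA|xA] := boolP (x \in A).
      have := Acl x xA z Dxz; apply: contraTneq => <-.
      by rewrite (negbTE yA).
    have := ysink x; rewrite mem_filter xA L1L //= => /(_ isT).
    by apply: contraNneq => ->.
  - apply: Psidep => z zA; apply: updX_other.
    by apply: contraNneq yA => ->.
rewrite (SumR_rem _ yL) /= -/L1.
rewrite (SumR_ext _ (key true)) (SumR_ext _ (key false)) -SumR_add.
rewrite (@SumR_ext _ _ (fun w => (\prod_(x <- L1) fac x w) * Psi w)); last first.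
  by move=> w /=; rewrite -mulrDl addrC subrK mul1r.
apply: IH.
- by rewrite size_rem // -subn1 leq_subLR add1n.
- exact: rem_uniq.
- move=> x xA; rewrite mem_rem_uniq // inE (AL x xA) andbT.
  by apply: contraNneq yA => <-.
- by move=> x /L1L; apply: dep.
- by move=> K K0 KL1 KA; apply: sink => // x /KL1 /L1L.
Qed.
End MargP.
End Marg.

Section B.
Variables (S Rel : finType) (ar : Rel -> seq S).

Lemma mem_cons_allpairs (T : eqType) (s1 : seq T) (s2 : seq (seq T)) k t :
  (k :: t \in [seq a :: b | a <- s1, b <- s2]) = (k \in s1) && (t \in s2).
Proof.
apply/allpairsP/andP => [[[a b] /= [ka tb [-> ->]]] //|[ks ts]].
by exists (k, t).
Qed.

Lemma nil_notin_allpairs (T : eqType) (s1 : seq T) (s2 : seq (seq T)) :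
  ([::] \in [seq a :: b | a <- s1, b <- s2]) = false.
Proof. by apply/allpairsP => -[[a b] [_ _]]. Qed.

Lemma mem_tuples (n : S -> nat) ss t :
  (t \in tuples n ss) = (size t == size ss) && all (fun p => p.2 < n p.1)%N (zip ss t).
Proof.
elim: ss t => [|s ss IH] [|k t] //=.
- by rewrite nil_notin_allpairs.
- by rewrite mem_cons_allpairs IH mem_iota add0n /= eqSS andbCA.
Qed.

Lemma mem_fst_filter (E : seq (var S)) s k :
  (k \in [seq e.2 | e <- E & e.1 == s]) = ((s, k) \in E).
Proof.
apply/mapP/idP => [[e]|sk]; last by exists (s, k); rewrite // mem_filter eqxx.
by rewrite mem_filter => /andP[/eqP <- eE] ->; case: e eE.
Qed.

Lemma mem_etuples (E : seq (var S)) ss t :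
  (t \in etuples E ss) = (size t == size ss) && all (fun p => p \in E) (zip ss t).
Proof.
elim: ss t => [|s ss IH] [|k t] //=.
- by rewrite nil_notin_allpairs.
- by rewrite mem_cons_allpairs IH mem_fst_filter eqSS andbCA.
Qed.

Lemma uniq_tuples (n : S -> nat) ss : uniq (tuples n ss).
Proof.
elim: ss => [|s ss IH] //=.
apply: allpairs_uniq => //; first exact: iota_uniq.
by move=> [a b] [c d] _ _ /= [-> ->].
Qed.

Lemma uniq_ground (n : S -> nat) : uniq (ground_atoms ar n).
Proof.
apply: (allpairs_uniq_dep (T := fun _ => seq nat)); first exact: enum_uniq.
  by move=> r _; exact: uniq_tuples.
by move=> [r t] [r' t'] _ _ /= [e1 e2]; subst.
Qed.

Lemma size_tuples_gt0 (n : S -> nat) ss :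
  nonempty_domain n -> (0 < size (tuples n ss))%N.
Proof.
move=> /forallP ne; elim: ss => [|s ss IH] //=.
by rewrite size_allpairs muln_gt0 size_iota ne.
Qed.

Lemma uniq_zip_iota (T : eqType) (s : seq T) : uniq (zip s (iota 0 (size s))).
Proof.
apply: (@map_uniq _ _ snd).
by rewrite -/(unzip2 _) unzip2_zip ?size_iota // iota_uniq.
Qed.

Lemma mem_xvars r v : v \in xvars ar r ->
  [/\ (v.2 < size (ar r))%N, v.1 = nth v.1 (ar r) v.2 & index v (xvars ar r) = v.2].
Proof.
case: v => s j; rewrite /xvars => vx; have := vx; move=> /(nthP (s, j)) [i].
rewrite size_zip size_iota minnn => isz.
rewrite nth_zip ?size_iota // nth_iota // add0n => -[es ej].
have -> : (s, j) = nth (s, j) (zip (ar r) (iota 0 (size (ar r)))) i.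
  by rewrite nth_zip ?size_iota // nth_iota // add0n es ej.
rewrite index_uniq ?size_zip ?size_iota ?minnn //; last exact: uniq_zip_iota.
by rewrite nth_zip ?size_iota // nth_iota //= add0n; split => //; rewrite es.
Qed.

Lemma eval_n_qf (n n' : S -> nat) (w : structure Rel) e (f : formula S Rel) :
  qfree f -> Defs.eval n w e f = Defs.eval n' w e f.
Proof.
elim: f => //= [g IH|g IHg h IHh|g IHg h IHh] => [/IH -> //|/andP[/IHg -> /IHh ->]|/andP[/IHg -> /IHh ->]] //.
Qed.

Lemma eval_env (n : S -> nat) (w : structure Rel) e e' (f : formula S Rel) :
  qfree f -> {in allvars f, e =1 e'} -> Defs.eval n w e f = Defs.eval n w e' f.
Proof.
elim: f => //= [r args _ h|g IH q h|g IHg h IHh /andP[qg qh] he|g IHg h IHh /andP[qg qh] he].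
- by congr (w r _); apply/eq_in_map.
- by rewrite IH.
- by rewrite (IHg qg) ?(IHh qh) // => v vv; apply: he; rewrite mem_cat vv ?orbT.
- by rewrite (IHg qg) ?(IHh qh) // => v vv; apply: he; rewrite mem_cat vv ?orbT.
Qed.

Lemma eval_w (n : S -> nat) (w w' : structure Rel) e (f : formula S Rel) :
  qfree f -> well_sorted ar f ->
  (forall r' args, r' \in rels f -> {subset args <= allvars f} ->
     map fst args = ar r' -> w r' (map e args) = w' r' (map e args)) ->
  Defs.eval n w e f = Defs.eval n w' e f.
Proof.
elim: f => //= [r args _ /eqP ws h|g IH q ws h|g IHg h IHh /andP[qg qh] /andP[wg wh] he|g IHg h IHh /andP[qg qh] /andP[wg wh] he].
- by apply: h => //; rewrite mem_head.
- by rewrite IH.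
- rewrite (IHg qg wg) ?(IHh qh wh) // => r' args rr sa ma; apply: he => //;
    by rewrite ?mem_cat ?rr ?orbT // => v /sa vv; rewrite mem_cat vv ?orbT.
- rewrite (IHg qg wg) ?(IHh qh wh) // => r' args rr sa ma; apply: he => //;
    by rewrite ?mem_cat ?rr ?orbT // => v /sa vv; rewrite mem_cat vv ?orbT.
Qed.

Variable R : realType.

Lemma frac_qf (n : S -> nat) w r (c : cformula S Rel) a :
  nonempty_domain n -> qfree c.2 -> all (fun v => v \in xvars ar r) (allvars c.2) ->
  Defs.frac R ar n w r c a = (Defs.eval n w (assign ar r c.1 a [::]) c.2)%:R.
Proof.
move=> ne qc /allP ax; rewrite /Defs.frac.
have e b : Defs.eval n w (assign ar r c.1 a b) c.2 = Defs.eval n w (assign ar r c.1 a [::]) c.2.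
  by apply: eval_env => // v /ax vx; rewrite /assign vx.
rewrite (eq_count e).
have sz : (size (tuples n [seq i.1 | i <- c.1]))%:R != 0 :> R.
  by rewrite pnatr_eq0 -lt0n size_tuples_gt0.
case: (Defs.eval _ _ _ _).
- by rewrite count_predT divff.
- by rewrite count_pred0 mul0r.
Qed.

Lemma frac01 (n : S -> nat) w r (c : cformula S Rel) a :
  0 <= Defs.frac R ar n w r c a <= 1.
Proof.
rewrite /Defs.frac; set k := count _ _; set m := size _.
have km : (k <= m)%N by apply: count_size.
apply/andP; split; first by rewrite divr_ge0.
have [->|m0] := eqVneq m 0%N; first by rewrite invr0 mulr0.
by rewrite ler_pdivrMr ?ltr0n ?lt0n // mul1r ler_nat.
Qed.


Lemma zip_map2 (T U V : Type) (f : T -> U) (g : T -> V) s :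
  zip (map f s) (map g s) = map (fun x => (f x, g x)) s.
Proof. by elim: s => //= x s ->. Qed.

Variable B : flbn R S Rel.
Hypothesis wf : flbn_wf ar B.
Hypothesis qf : qf_lbn ar B.

Let c0 : cformula S Rel := ([::], FTrue).

Lemma chi_qf r i : (i < size (chis B r))%N ->
  qfree (nth c0 (chis B r) i).2 &&
  all (fun v => v \in xvars ar r) (allvars (nth c0 (chis B r) i).2).
Proof. by move=> ir; apply: (all_nthP c0 (qf r)). Qed.

Lemma chi_wf r i : (i < size (chis B r))%N ->
  cformula_wf ar (dag B) r (nth c0 (chis B r) i).
Proof. by move=> ir; case: wf => _ h _ _; apply: (all_nthP c0 (h r)). Qed.

Lemma atom_prob_n (n n' : S -> nat) w r a :
  nonempty_domain n -> nonempty_domain n' ->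
  atom_prob ar B n w r a = atom_prob ar B n' w r a.
Proof.
move=> ne ne'; rewrite /atom_prob; congr (comb _); apply/rowP => i; rewrite !mxE.
have /andP[q x] := chi_qf (ltn_ord i).
by rewrite !frac_qf // (eval_n_qf n n').
Qed.

Lemma atom_prob01 (n : S -> nat) w r a : 0 <= atom_prob ar B n w r a <= 1.
Proof.
case: wf => _ _ _ h; apply: h; rewrite inE /unit_cube /= => i.
by rewrite mxE frac01.
Qed.

Lemma atom_prob_dep (n : S -> nat) r a (w w' : structure Rel) :
  size a = size (ar r) ->
  (forall r' t, dag B r' r -> t \in etuples (zip (ar r) a) (ar r') -> w r' t = w' r' t) ->
  atom_prob ar B n w r a = atom_prob ar B n w' r a.
Proof.
move=> sa h; rewrite /atom_prob; congr (comb _); apply/rowP => i; rewrite !mxE.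
have /andP[q /allP x] := chi_qf (ltn_ord i).
have := chi_wf (ltn_ord i).
case: (nth c0 (chis B r) i) q x => ys f /= q x /and5P[_ _ wsf /allP rf _].
rewrite /Defs.frac /=; congr (_%:R / _); apply: eq_count => b /=.
apply: eval_w => // r' args rr sa' ma; apply: h; first exact: rf.
rewrite mem_etuples size_map -ma size_map eqxx /= zip_map2 all_map.
apply/allP => v /sa' /x vx /=.
have [v2 v1 iv] := mem_xvars vx.
rewrite /assign vx iv.
have -> : (v.1, nth 0%N a v.2) = nth (v.1, 0%N) (zip (ar r) a) v.2.
  by rewrite nth_zip // -v1.
by apply: mem_nth; rewrite size_zip sa minnn.
Qed.

End B.

Lemma sink_rel (T : finType) (e : rel T) :
  (~ exists (x : T) (p : seq T), [&& p != [::], path e x p & last x p == x]) ->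
  forall P : seq T, P != [::] ->
  exists2 r0, r0 \in P & forall r, r \in P -> ~~ e r0 r.
Proof.
move=> acyc P P0.
have [/existsP [r0 /andP[r0P /forallP h]]|none] :=
  boolP [exists r0, (r0 \in P) && [forall r, (r \in P) ==> ~~ e r0 r]].
  by exists r0 => // r rP; have := h r; rewrite rP.
have hs r0 : r0 \in P -> exists2 r, r \in P & e r0 r.
  move=> r0P; apply/exists_inP; apply: contraNT none => /exists_inPn hn.
  apply/existsP; exists r0; rewrite r0P /=; apply/forallP => r.
  by apply/implyP => rP; apply: hn.
pose f r0 := odflt r0 [pick r | (r \in P) && e r0 r].
have hf r0 : r0 \in P -> (f r0 \in P) && e r0 (f r0).
  move=> /hs [r rP er]; rewrite /f; case: pickP => [r' -> //|/(_ r)].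
  by rewrite rP er.
have [x xP] : exists x, x \in P by case: (P) P0 => // x0 P' _; exists x0; rewrite mem_head.
clear none.
have ext k : exists p, [&& uniq (x :: p), path e x p, all (fun r => r \in P) p & size p == k].
  elim: k => [|k [p /and4P[up pp ap /eqP sp]]]; first by exists [::].
  have zP : last x p \in P.
    by case: (lastP p) ap => // q z; rewrite last_rcons all_rcons => /andP[].
  have /andP[yP ey] := hf _ zP; set y := f (last x p) in yP ey.
  have [yin|yout] := boolP (y \in x :: p).
    exfalso; apply: acyc.
    move: yin; rewrite in_cons => /orP[/eqP yx|yp].
      have ex : e (last x p) x by move: ey; rewrite yx.
      exists x, (rcons p x); rewrite rcons_path pp ex last_rcons eqxx andbT /=.
      by case: (p).
    case/splitPr: yp pp ey => p1 p2 pp ey.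
    exists y, (rcons p2 y); rewrite last_rcons eqxx andbT rcons_path.
    rewrite cat_path /= in pp; case/and3P: pp => _ _ ->.
    by rewrite last_cat /= in ey; rewrite ey; case: (p2).
  exists (rcons p y); rewrite -rcons_cons rcons_uniq yout up rcons_path pp ey.
  by rewrite all_rcons yP ap size_rcons sp eqxx.
have [p /and4P[up _ _ /eqP sp]] := ext #|T|.
have := max_card (mem (x :: p)); rewrite (card_uniqP up) /= sp.
by rewrite ltnn.
Qed.

Section C.
Variables (R : realType) (S Rel : finType) (ar : Rel -> seq S).
Variable B : flbn R S Rel.
Hypothesis wf : flbn_wf ar B.
Hypothesis qf : qf_lbn ar B.

Definition Xa := (Rel * seq nat)%type.
Definition cw (w : Xa -> bool) : structure Rel := fun r t => w (r, t).
Definition pp (n : S -> nat) (x : Xa) (w : Xa -> bool) : R :=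
  atom_prob ar B n (cw w) x.1 x.2.
Definition PnF (n : S -> nat) (Psi : structure Rel -> R) : R :=
  SumR (ground_atoms ar n) (fun w => world_prob ar B n (cw w) * Psi (cw w)).

Lemma sum_bitseqs (L : seq Xa) (G : (Xa -> bool) -> R) :
  \sum_(bs <- bitseqs (size L)) G (fun x => nth false bs (index x L)) = SumR L G.
Proof.
elim: L G => [|y L IH] G; first by rewrite /= big_cons big_nil addr0.
rewrite /= big_cat /= big_cat /= big_nil addr0 !big_map.
rewrite -(IH (fun w => G (updX y true w))) -(IH (fun w => G (updX y false w))).
by congr (_ + _); apply: eq_bigr => bs _; congr G; apply: boolp.funext => x;
  rewrite /updX /=; case: (y == x).
Qed.

Lemma Pn_PnF n E Y : Pn ar B n E Y = PnF n (fun w => (in_cyl ar E Y w)%:R).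
Proof. by rewrite /Pn /PnF -sum_bitseqs. Qed.

Lemma world_prob_fac n w :
  world_prob ar B n (cw w) = \prod_(x <- ground_atoms ar n) fac (pp n) x w.
Proof. by rewrite /world_prob; apply: eq_bigr => -[r t]. Qed.


Definition AE (E : seq (var S)) : seq Xa :=
  undup [seq (r, t) | r <- enum Rel, t <- etuples E (ar r)].

Definition based (E : seq (var S)) (Psi : structure Rel -> R) :=
  forall w w', (forall r t, t \in etuples E (ar r) -> w r t = w' r t) -> Psi w = Psi w'.

Definition n1 : S -> nat := fun _ => 1%N.

Lemma ne_n1 : nonempty_domain n1. Proof. by apply/forallP. Qed.

Definition Mval (E : seq (var S)) (Psi : structure Rel -> R) : R :=
  SumR (AE E) (fun w => (\prod_(x <- AE E) fac (pp n1) x w) * Psi (cw w)).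

Definition Dp (x z : Xa) : bool :=
  dag B z.1 x.1 && (z.2 \in etuples (zip (ar x.1) x.2) (ar z.1)).

Lemma mem_AE E x : (x \in AE E) = (x.2 \in etuples E (ar x.1)).
Proof.
rewrite mem_undup; apply/allpairsPdep/idP => [[r [t [_ tE ->]]] //|xE].
by exists x.1, x.2; rewrite mem_enum xE; case: x xE.
Qed.

Lemma mem_ground n x : (x \in ground_atoms ar n) = (x.2 \in tuples n (ar x.1)).
Proof.
apply/allpairsPdep/idP => [[r [t [_ tE ->]]] //|xE].
by exists x.1, x.2; rewrite mem_enum xE; case: x xE.
Qed.

Lemma sink_atoms (K : seq Xa) : K != [::] ->
  exists2 y, y \in K & forall x, x \in K -> ~~ Dp x y.
Proof.
move=> K0; have acyc : acyclic (dag B) by case: wf.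
have P0 : map fst K != [::] by case: (K) K0.
have [r0 r0K h] := sink_rel acyc P0.
case/mapP: r0K => y yK r0y; exists y => // x xK; rewrite /Dp -r0y.
by rewrite (negbTE (h _ (map_f _ xK))).
Qed.

Lemma PnF_M n E Psi : nonempty_domain n -> cyl_defined n E -> based E Psi ->
  PnF n Psi = Mval E Psi.
Proof.
move=> ne cd bP; rewrite /PnF /Mval.
rewrite (@SumR_ext _ _ _ _ (fun w => (\prod_(x <- ground_atoms ar n) fac (pp n) x w) * Psi (cw w)));
  last by move=> w; rewrite world_prob_fac.
rewrite (@marg _ _ (pp n) Dp (AE E) (fun w => Psi (cw w))).
- apply: SumR_ext => w; congr (_ * _); apply: eq_bigr => x _.
  by rewrite /fac /pp (atom_prob_n qf _ _ _ ne ne_n1).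
- exact: uniq_ground.
- move=> x; rewrite mem_AE mem_ground !mem_tuples mem_etuples => /andP[-> /allP h] /=.
  by apply/allP => z /h zE; move/allP: cd => /(_ z zE).
- exact: undup_uniq.
- move=> x; rewrite mem_ground mem_tuples => /andP[/eqP sx _] w w' h.
  by apply: (atom_prob_dep wf qf) => // r' t d te; apply: h; rewrite /Dp d te.
- move=> x; rewrite mem_AE mem_etuples => /andP[_ /allP hx] z /andP[_].
  rewrite mem_AE !mem_etuples => /andP[-> /allP hz] /=.
  by apply/allP => q /hz /hx.
- by move=> K K0 _ _; apply: sink_atoms.
- move=> w w' h; apply: bP => r t te; apply: h; by rewrite mem_AE.
Qed.


Lemma SumR_ge0 (L : seq Xa) (G : (Xa -> bool) -> R) :
  (forall w, 0 <= G w) -> 0 <= SumR L G.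
Proof. by elim: L G => [|y L IH] G h //=; rewrite addr_ge0 ?IH. Qed.

Lemma PnF_add n Psi1 Psi2 :
  PnF n (fun w => Psi1 w + Psi2 w) = PnF n Psi1 + PnF n Psi2.
Proof.
rewrite /PnF -SumR_add; apply: SumR_ext => w; exact: mulrDr.
Qed.

Lemma world_prob_ge0 n w : 0 <= world_prob ar B n w.
Proof.
rewrite /world_prob; apply: prodr_ge0 => g _.
have /andP[h0 h1] := atom_prob01 wf n w g.1 g.2.
by case: ifP => _; rewrite ?subr_ge0.
Qed.

Lemma PnF_ge0 n Psi : (forall w, 0 <= Psi w) -> 0 <= PnF n Psi.
Proof.
by move=> h; apply: SumR_ge0 => w; rewrite mulr_ge0 ?world_prob_ge0.
Qed.

Lemma PnF_zero n : PnF n (fun _ => 0) = 0.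
Proof.
rewrite /PnF (@SumR_ext _ _ _ _ (fun w => 0 * world_prob ar B n (cw w))).
  by rewrite SumR_scale mul0r.
by move=> w; rewrite mulr0 mul0r.
Qed.

Lemma PnF_one n : nonempty_domain n -> PnF n (fun _ => 1) = 1.
Proof.
move=> ne; rewrite /PnF.
rewrite (@SumR_ext _ _ _ _ (fun w => (\prod_(x <- ground_atoms ar n) fac (pp n) x w) * (fun _ => 1) w));
  last by move=> w; rewrite world_prob_fac.
rewrite (@marg _ _ (pp n) Dp [::] (fun _ => 1)) /= ?big_nil ?mulr1 //.
- exact: uniq_ground.
- move=> x; rewrite mem_ground mem_tuples => /andP[/eqP sx _] w w' h.
  by apply: (atom_prob_dep wf qf) => // r' t d te; apply: h; rewrite /Dp d te.
- by move=> K K0 _ _; apply: sink_atoms.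
Qed.

Lemma etuples_catl (E E' : seq (var S)) ss t :
  t \in etuples E ss -> t \in etuples (E ++ E') ss.
Proof.
rewrite !mem_etuples => /andP[-> /allP h]; apply/allP => x /h.
by rewrite mem_cat => ->.
Qed.

Lemma etuples_catr (E E' : seq (var S)) ss t :
  t \in etuples E' ss -> t \in etuples (E ++ E') ss.
Proof.
rewrite !mem_etuples => /andP[-> /allP h]; apply/allP => x /h.
by rewrite mem_cat => ->; rewrite orbT.
Qed.

Lemma based_cyl E Y : based E (fun w => (in_cyl ar E Y w)%:R).
Proof.
move=> w w' h; rewrite /in_cyl; congr ((nat_of_bool _)%:R).
apply/idP/idP => /allP H; apply/allP => r rR; have /allP H2 := H r rR;
  apply/allP => t tE; first [by rewrite h // H2 | by rewrite -h // H2].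
Qed.

Lemma projective_Pn : projective ar B.
Proof.
move=> E Y n n' ne ne' cd cd'.
by rewrite !Pn_PnF (PnF_M _ _ (@based_cyl E Y)) // (PnF_M _ _ (@based_cyl E Y)).
Qed.

End C.

Local Open Scope classical_set_scope.
Definition Inner : Type := prod_topology (fun _ : seq nat => bool).
HB.instance Definition _ := Pointed.on Inner.
HB.instance Definition _ := Nbhs.on Inner.
HB.instance Definition _ := Topological.on Inner.

Lemma Inner_compact : compact [set: Inner].
Proof.
have := @tychonoff _ (fun _ : seq nat => _) _ (fun=> bool_compact).
by congr (compact _); rewrite eqEsubset.
Qed.

Definition Top (Rel : finType) : Type := prod_topology (fun _ : Rel => Inner).
HB.instance Definition _ (Rel : finType) := Pointed.on (Top Rel).
HB.instance Definition _ (Rel : finType) := Nbhs.on (Top Rel).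
HB.instance Definition _ (Rel : finType) := Topological.on (Top Rel).

Lemma Top_compact (Rel : finType) : compact [set: Top Rel].
Proof.
have := @tychonoff _ (fun _ : Rel => Inner) _ (fun=> Inner_compact).
by congr (compact _); rewrite eqEsubset.
Qed.

Lemma nbhs_coord (Rel : finType) (w : Top Rel) r t :
  nbhs w [set w' : Top Rel | w' r t = w r t].
Proof.
have h1 : nbhs (w r : Inner) [set f : Inner | f t = w r t].
  apply: (@proj_continuous (seq nat) (fun _ => bool) t (w r : Inner) [set w r t]).
  by [].
exact: (@proj_continuous Rel (fun _ => Inner) r w _ h1).
Qed.

Section D.
Variables (R : realType) (S Rel : finType) (ar : Rel -> seq S).
Variable B : flbn R S Rel.
Hypothesis wf : flbn_wf ar B.
Hypothesis qf : qf_lbn ar B.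

Definition basedS (E : seq (var S)) (C : set (structure Rel)) :=
  forall w w', (forall r t, t \in etuples E (ar r) -> w r t = w' r t) -> C w -> C w'.

Definition SR : set (set (structure Rel)) := [set C | exists E, basedS E C].

Lemma basedS_catl E E' C : basedS E C -> basedS (E ++ E') C.
Proof. by move=> h w w' e; apply: h => r t te; apply: e; apply: etuples_catl. Qed.

Lemma basedS_catr E E' C : basedS E' C -> basedS (E ++ E') C.
Proof. by move=> h w w' e; apply: h => r t te; apply: e; apply: etuples_catr. Qed.

Lemma basedS_C E C : basedS E C -> basedS E (~` C).
Proof.
move=> h w w' e nCw Cw'; apply: nCw; apply: (h w') => // r t te.
by rewrite e.
Qed.

Lemma basedS_U E C1 C2 : basedS E C1 -> basedS E C2 -> basedS E (C1 `|` C2).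
Proof. by move=> h1 h2 w w' e [/(h1 _ _ e)|/(h2 _ _ e)]; [left|right]. Qed.

Lemma basedS_I E C1 C2 : basedS E C1 -> basedS E C2 -> basedS E (C1 `&` C2).
Proof. by move=> h1 h2 w w' e [/(h1 _ _ e) ? /(h2 _ _ e)]. Qed.

Lemma SR0 : SR set0. Proof. by exists [::]. Qed.

Lemma SRU : setU_closed SR.
Proof.
move=> A1 A2 [E1 h1] [E2 h2]; exists (E1 ++ E2).
by apply: basedS_U; [apply: basedS_catl|apply: basedS_catr].
Qed.

Lemma SRD : setD_closed SR.
Proof.
move=> A1 A2 [E1 h1] [E2 h2]; exists (E1 ++ E2); rewrite setDE.
by apply: basedS_I; [apply: basedS_catl|apply: basedS_C; apply: basedS_catr].
Qed.

Lemma SRT0 : SR setT. Proof. by exists [::]. Qed.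

Definition Ind (C : set (structure Rel)) : structure Rel -> R :=
  fun w => (w \in C)%:R.

Lemma based_Ind E C : basedS E C -> based ar E (Ind C).
Proof.
move=> h w w' e; rewrite /Ind; congr ((nat_of_bool _)%:R).
apply/idP/idP => /set_mem Cw; apply: mem_set; first exact: (h w).
by apply: (h w') => // r t te; rewrite e.
Qed.

Definition nE (E : seq (var S)) : S -> nat := fun _ => (\max_(e <- E) e.2).+1.

Lemma nE_ne E : nonempty_domain (nE E). Proof. by apply/forallP. Qed.

Lemma nE_cd E : cyl_defined (nE E) E.
Proof. by apply/allP => e eE; rewrite /nE ltnS; apply: (leq_bigmax_seq e). Qed.

Lemma cd_catl (n : S -> nat) (E E' : seq (var S)) : cyl_defined n (E ++ E') -> cyl_defined n E.
Proof. by rewrite /cyl_defined all_cat => /andP[]. Qed.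

Lemma cd_catr (n : S -> nat) (E E' : seq (var S)) : cyl_defined n (E ++ E') -> cyl_defined n E'.
Proof. by rewrite /cyl_defined all_cat => /andP[]. Qed.

Definition Ech (C : set (structure Rel)) : seq (var S) := xget [::] (fun E => basedS E C).

Definition mu0 (C : set (structure Rel)) : \bar R :=
  (PnF ar B (nE (Ech C)) (Ind C))%:E.

Lemma mu_val E C n : basedS E C -> nonempty_domain n -> cyl_defined n E ->
  mu0 C = (PnF ar B n (Ind C))%:E.
Proof.
move=> h ne cd; have h0 : basedS (Ech C) C := xgetPex [::] (ex_intro (fun E => basedS E C) E h).
rewrite /mu0; congr (_%:E).
have cd2 := nE_cd (Ech C ++ E).
rewrite (PnF_M wf qf (nE_ne _) (nE_cd _) (based_Ind h0)).
rewrite -(PnF_M wf qf (nE_ne _) (cd_catl cd2) (based_Ind h0)).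
rewrite (PnF_M wf qf (nE_ne _) (cd_catr cd2) (based_Ind h)).
by rewrite -(PnF_M wf qf ne cd (based_Ind h)).
Qed.

Lemma mu0_set0 : mu0 set0 = 0%E.
Proof.
rewrite (@mu_val [::] set0 (@n1 S)) //; last exact: ne_n1.
rewrite (_ : Ind set0 = fun _ => 0) ?PnF_zero //.
by apply: boolp.funext => w; rewrite /Ind in_set0.
Qed.

Lemma mu0_ge0 C : (0 <= mu0 C)%E.
Proof. by rewrite lee_fin PnF_ge0 // => w; rewrite ler0n. Qed.

Lemma mu0_U2 C1 C2 : SR C1 -> SR C2 -> C1 `&` C2 = set0 ->
  mu0 (C1 `|` C2) = (mu0 C1 + mu0 C2)%E.
Proof.
move=> [E1 h1] [E2 h2] dis.
have b1 := @basedS_catl E1 E2 C1 h1; have b2 := @basedS_catr E1 E2 C2 h2.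
have cd := nE_cd (E1 ++ E2); have ne := nE_ne (E1 ++ E2).
rewrite (mu_val b1 ne cd) (mu_val b2 ne cd) (mu_val (basedS_U b1 b2) ne cd).
rewrite -EFinD -PnF_add; congr (PnF _ _ _ _)%:E; apply: boolp.funext => w.
rewrite /Ind in_setU; case: (boolP (w \in C1)) => w1; case: (boolP (w \in C2)) => w2 //=.
- have : (C1 `&` C2) w by split; apply: set_mem.
  by rewrite dis.
all: by rewrite ?add0r ?addr0.
Qed.


Lemma SR_big N (F : nat -> set (structure Rel)) : (forall i, SR (F i)) ->
  SR (\big[setU/set0]_(i < N) F i).
Proof.
move=> h; elim: N => [|N IH]; first by rewrite big_ord0; exact: SR0.
by rewrite big_ord_recr /=; apply: SRU.
Qed.

Lemma mu0_big N (F : nat -> set (structure Rel)) : (forall i, SR (F i)) ->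
  trivIset setT F ->
  mu0 (\big[setU/set0]_(i < N) F i) = (\sum_(i < N) mu0 (F i))%E.
Proof.
move=> h tF; elim: N => [|N IH]; first by rewrite !big_ord0 mu0_set0.
rewrite !big_ord_recr /= mu0_U2 ?IH //; first exact: SR_big.
apply/seteqP; split => // w [wU wF].
rewrite -bigcup_mkord in wU; case: wU => i /= iN wi.
have := tF i N I I; rewrite /= => /(_ (ex_intro _ w (conj wi wF))) iE.
by move: iN; rewrite iE ltnn.
Qed.

Lemma nbhs_list (w : Top Rel) (l : seq (Rel * seq nat)) :
  nbhs w [set w' : Top Rel | forall x, x \in l -> w' x.1 x.2 = w x.1 x.2].
Proof.
elim: l => [|x l IH]; first by apply: filterS filterT.
apply: filterS (filterI (nbhs_coord w x.1 x.2) IH) => w' [h1 h2] z.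
by rewrite in_cons => /orP[/eqP ->|/h2].
Qed.

Lemma open_based E (C : set (structure Rel)) : basedS E C -> @open (Top Rel) C.
Proof.
move=> h; rewrite openE => w Cw; rewrite /interior.
apply: filterS (nbhs_list w (AE ar E)) => w' hw'.
apply: (h w) => // r t te; rewrite (hw' (r, t)) // mem_AE //.
Qed.

Lemma fin_nonempty (F : nat -> set (structure Rel)) : (forall i, SR (F i)) ->
  trivIset setT F -> SR (\bigcup_n F n) ->
  exists N, forall j, (N <= j)%N -> F j = set0.
Proof.
move=> hF tF [E hE].
have cl : @closed (Top Rel) (\bigcup_n F n).
  rewrite -[X in closed X]setCK; apply: open_closedC.
  exact: (open_based (basedS_C hE)).
have cC : @compact (Top Rel) (\bigcup_n F n).
  exact: (subclosed_compact cl (@Top_compact Rel) (@subsetT _ _)).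
rewrite compact_cover in cC.
have hop : forall i, setT i -> @open (Top Rel) (F i).
  by move=> i _; have [Ei hi] := hF i; exact: (open_based hi).
have hcov : (\bigcup_n F n : set (Top Rel)) `<=` cover setT F.
  by move=> w [i _ Fiw]; exists i.
have [D' _ cov] := cC nat setT F hop hcov.
exists (\max_(i <- finmap.enum_fset D') i).+1 => j jN; apply/seteqP; split => // w Fjw.
have [i iD Fiw] := cov w (ex_intro2 _ _ j I Fjw).
have := tF i j I I (ex_intro _ w (conj Fiw Fjw)) => ij.
have : (i <= \max_(i <- finmap.enum_fset D') i)%N by apply: (leq_bigmax_seq i).
by rewrite ij leqNgt jN.
Qed.


Lemma mu0_ssa (F : nat -> set (structure Rel)) : (forall i, SR (F i)) ->
  trivIset setT F -> SR (\bigcup_n F n) ->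
  (fun n => (\sum_(0 <= i < n) mu0 (F i))%E) @ \oo --> mu0 (\bigcup_n F n).
Proof.
move=> hF tF hU; have [N hN] := fin_nonempty hF tF hU.
have eU : \bigcup_n F n = \big[setU/set0]_(i < N) F i.
  rewrite -bigcup_mkord; apply/seteqP; split => w [i _ Fiw]; last by exists i.
  exists i => //=; rewrite ltnNge; apply/negP => /hN Fi0.
  by rewrite Fi0 in Fiw.
rewrite eU mu0_big //; apply: cvg_near_cst; exists N => // n /= nN.
rewrite (@big_cat_nat _ _ _ N) //= big_mkord.
rewrite [X in (_ + X)%E]big_nat_cond [X in (_ + X)%E]big1 ?adde0 // => i /andP[/andP[Ni _] _].
by rewrite hN // mu0_set0.
Qed.


Definition SRT : Type := structure Rel.
HB.instance Definition _ := Pointed.on SRT.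
HB.instance Definition _ := @isRingOfSets.Build default_measure_display SRT SR SR0 SRU SRD.

Definition muS (C : set SRT) : \bar R := mu0 C.

Lemma muS_ssa : semi_sigma_additive muS.
Proof. by move=> F mF tF mU; apply: mu0_ssa. Qed.

HB.instance Definition _ := isMeasure.Build default_measure_display SRT R muS
  mu0_set0 mu0_ge0 muS_ssa.

Definition Pfun : set (OmegaInf ar) -> \bar R := measure_extension muS.

Lemma basedS_cyl E Y : basedS E (cyl ar E Y).
Proof.
move=> w w' h; rewrite /cyl /in_cyl /= => /allP H; apply/allP => r rR.
have /allP H2 := H r rR; apply/allP => t tE.
by rewrite -h // H2.
Qed.

Lemma gen_SR : gen_sets ar `<=` SR.
Proof. by move=> A [E [Y ->]]; exists E; exact: basedS_cyl. Qed.

Lemma meas_incl A : <<s gen_sets ar >> A -> <<s SR >> A.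
Proof.
apply: smallest_sub; first exact: smallest_sigma_algebra.
by apply: subset_trans gen_SR _; exact: sub_sigma_algebra.
Qed.

Lemma Pfun0 : Pfun set0 = 0%E.
Proof. exact: measure0. Qed.

Lemma Pfun_ge0 A : (0 <= Pfun A)%E.
Proof. exact: measure_ge0. Qed.

Lemma Pfun_ssa : semi_sigma_additive Pfun.
Proof.
move=> F mF tF mU.
exact: (measure_semi_sigma_additive (s := measure_extension muS) F
  (fun i => meas_incl (mF i)) tF (meas_incl mU)).
Qed.

HB.instance Definition _ := isMeasure.Build _ (OmegaInf ar) R Pfun Pfun0 Pfun_ge0 Pfun_ssa.

Lemma Pfun_val E C n : basedS E C -> nonempty_domain n -> cyl_defined n E ->
  Pfun C = (PnF ar B n (Ind C))%:E.
Proof.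
move=> h ne cd; rewrite /Pfun /measure_extension measurable_mu_extE /=.
  exact: (mu_val h ne cd).
by exists E.
Qed.

Lemma Pfun_T : Pfun setT = 1%E.
Proof.
rewrite (@Pfun_val [::] setT (@n1 S)) //; last exact: ne_n1.
rewrite (_ : Ind setT = fun _ => 1) ?PnF_one //; first exact: ne_n1.
by apply: boolp.funext => w; rewrite /Ind in_setT.
Qed.

HB.instance Definition _ := Measure_isProbability.Build _ (OmegaInf ar) R Pfun Pfun_T.

Lemma Ind_cyl E Y : Ind (cyl ar E Y) = fun w => (in_cyl ar E Y w)%:R.
Proof.
apply: boolp.funext => w; rewrite /Ind; congr ((nat_of_bool _)%:R).
by apply/idP/idP => [/set_mem|h]; [|apply: mem_set].
Qed.

Lemma ev_def (ns : nat -> S -> nat) : (forall k s, (ns k s <= ns k.+1 s)%N) ->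
  (forall s M, exists k, (M <= ns k s)%N) ->
  forall l : seq (S * nat), exists K, forall k, (K <= k)%N ->
    all (fun p => p.2 < ns k p.1)%N l.
Proof.
move=> mono unb; elim => [|[s M] l [K hK]]; first by exists 0%N.
have [k0 hk0] := unb s M.+1.
exists (maxn k0 K) => k; rewrite geq_max => /andP[k0k Kk] /=.
rewrite hK // andbT; apply: leq_trans hk0 _.
have m d : (ns k0 s <= ns (k0 + d)%N s)%N.
  by elim: d => [|d IH]; rewrite ?addn0 // addnS (leq_trans IH (mono _ _)).
by rewrite -(subnKC k0k) m.
Qed.

Lemma asym : asymptotic_limit B Pfun.
Proof.
move=> ns mono unb E Y.
change ((fun k => Pn ar B (ns k) E Y) @ \oo --> fine (Pfun (cyl ar E Y))).
rewrite (Pfun_val (@basedS_cyl E Y) (@nE_ne E) (@nE_cd E)) /=.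
have [K hK] := ev_def mono unb ([seq (s, 0%N) | s <- enum S] ++ E).
apply: cvg_near_cst; exists K => // k /= Kk.
have := hK k Kk; rewrite all_cat => /andP[/allP hS cd].
have ne : nonempty_domain (ns k).
  by apply/forallP => s; have := hS (s, 0%N) (map_f _ (mem_enum _ s)).
rewrite Pn_PnF -Ind_cyl.
have := Pfun_val (@basedS_cyl E Y) ne cd.
rewrite (Pfun_val (@basedS_cyl E Y) (@nE_ne E) (@nE_cd E)) => -[->].
by [].
Qed.

Lemma exP : exists P : probability (OmegaInf ar) R, asymptotic_limit B P.
Proof. by eexists; apply: asym. Qed.

End D.

Theorem proposition2 (R : realType) (S Rel : finType) (ar : Rel -> seq S)
  (B : flbn R S Rel) :
  flbn_wf ar B -> qf_lbn ar B ->
  projective ar B /\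
  exists P : probability (OmegaInf ar) R, asymptotic_limit B P.
Proof.
move=> wf qf; split; first exact: projective_Pn.
exact: exP.
Qed.
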